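(* Let $U_{L}:=F_{\mathbf{i}}^{(\boldsymbol n)}\otimes I_{s}$ and $U_{R}:=F_{\mathbf{i}}^{(\boldsymbol n)}\otimes I_{t}$. Define, for $\ell=0,1,2,3$, \[ \Lambda_{\ell}:=\mathrm{blockdiag}\bigl(\widehat S_{\ell}(\boldsymbol k)\bigr)_{\boldsymbol k\in\Lambda_{\boldsymbol n}}, \qquad \widehat S_{\ell}(\boldsymbol k)=\sum_{\boldsymbol\rho\in \mathcal F}p_{\mathrm R}(\boldsymbol\rho)^{(\ell)}\,e^{-2\pi \mathbf{i}\sum_{\ell'=1}^{d} k_{\ell'}\rho_{\ell'}/n_{\ell'}}, \] where $\mathrm{blockdiag}$ denotes the block-diagonal matrix (ordered lexicographically in $\boldsymbol k$) with $s\times t$ diagonal blocks. Then \[ U_{L}\,C_{\boldsymbol n}\bigl(p_{\mathrm{R}}\bigr)\,U_{R}^{*} =\Lambda_{0}+\Lambda_{1}\,\mathbf{i}+\Lambda_{2}\,(A_{\boldsymbol n}\otimes I_{t})\,\mathbf{j} +\Lambda_{3}\,(A_{\boldsymbol n}\otimes I_{t})\,(\mathbf{i}\mathbf{j}). \] Moreover, with $\Pi_{L}:=P\otimes I_{s}$, $\Pi_{R}:=P\otimes I_{t}$, one has the block direct sum \[ \Pi_{L}U_{L}\,C_{\boldsymbol n}\bigl(p_{\mathrm{R}}\bigr)\,U_{R}^{*}\Pi_{R}^{*} =\bigoplus_{\boldsymbol k\in\mathrm{Fix}} \bigl( D_{1}(\boldsymbol k) +D_2(\boldsymbol k) \bigr)\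 \ \oplus\ \bigoplus_{\{\boldsymbol k,-\boldsymbol k\}}\begin{bmatrix} D_{1}(\boldsymbol k) & D_{2}(\boldsymbol k)\\[2pt] D_{2}(-\boldsymbol k) & D_{1}(-\boldsymbol k)\end{bmatrix}, \] where \[ D_{1}(\boldsymbol k):=\widehat S_{0}(\boldsymbol k)+\widehat S_{1}(\boldsymbol k)\,\mathbf{i},\qquad D_{2}(\boldsymbol k):=\bigl(\widehat S_{2}(\boldsymbol k)+\widehat S_{3}(\boldsymbol k)\,\mathbf{i}\bigr)\,\mathbf{j}. \]
   Context: Quaternions $\mathbb{H}$ with units $\mathbf{i},\mathbf{j}$, $\mathbf{k}=\mathbf{i}\mathbf{j}$, $\mathbf{i}^2=\mathbf{j}^2=-1$; $\mathbb{C}_{\mathbf{i}}=\mathrm{span}_{\mathbb{R}}\{1,\mathbf{i}\}$. Let $\boldsymbol n=(n_1,\dots,n_d)\in\mathbb{N}^d$, $\Lambda_{\boldsymbol n}=\prod_{\ell=1}^d\{0,\dots,n_\ell-1\}$ with lexicographic order, $N_{\boldsymbol n}=\prod_\ell n_\ell$. Multilevel periodic shifts $P_{\boldsymbol n}^{(\boldsymbol\rho)}:=P_{n_1}^{(\rho_1)}\otimes\cdots\otimes P_{n_d}^{(\rho_d)}$ with $[P_{n}^{(\rho)}]_{ij}=1$ if $i\equiv j+\rho \pmod n$, else $0$. Given a finite $\mathcal F\subset\mathbb{Z}^d$ and coefficients $p_{\mathrm R}(\boldsymbol\rho)\in\mathbb{H}^{s\times t}$ of the right trigonometric polynomial $p_{\mathrm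 R}(\boldsymbol\theta)=\sum_{\boldsymbol\rho\in\mathcal F}p_{\mathrm R}(\boldsymbol\rho)e^{-\mathbf{i}\langle\boldsymbol\rho,\boldsymbol\theta\rangle}$, the $d$-level $s\times t$ block circulant is $C_{\boldsymbol n}(p_{\mathrm R}):=\sum_{\boldsymbol\rho\in\mathcal F}P_{\boldsymbol n}^{(\boldsymbol\rho)}\otimes p_{\mathrm R}(\boldsymbol\rho)\in\mathbb{H}^{N_{\boldsymbol n}s\times N_{\boldsymbol n}t}$. Write each coefficient in Cartesian form $p_{\mathrm R}(\boldsymbol\rho)=p_{\mathrm R}(\boldsymbol\rho)^{(0)}+p_{\mathrm R}(\boldsymbol\rho)^{(1)}\mathbf{i}+p_{\mathrm R}(\boldsymbol\rho)^{(2)}\mathbf{j}+p_{\mathrm R}(\boldsymbol\rho)^{(3)}(\mathbf{i}\mathbf{j})$ with $p_{\mathrm R}(\boldsymbol\rho)^{(\ell)}\in\mathbb{R}^{s\times t}$. The QDFT is $[F_{\mathbf{i},n}]_{uv}=n^{-1/2}\exp(-2\pi\mathbf{i}uv/n)$, $u,v=0,\dots,n-1$, and $F_{\mathbf{i}}^{(\boldsymbol n)}:=F_{\mathbf{i},n_1}\otimes\cdots\otimes F_{\mathbf{i},n_d}$. $A_n\in\{0,1\}^{n\times n}$ is the permutation mapping $e_s\mapsto e_{(-s)\bmod n}$ and $A_{\boldsymbol n}:=A_{n_1}\otimes\cdots\otimes A_{n_d}$. For $\boldsymbol k\in\Lambda_{\boldsymbol n}$, $-\boldsymbol k:=((-k_1)\bmod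 n_1,\dots,(-k_d)\bmod n_d)$; $\mathrm{Fix}:=\{\boldsymbol k\in\Lambda_{\boldsymbol n}: 2k_\ell\equiv0 \pmod{n_\ell}\ \forall\ell\}$; $\mathcal K:=\{\boldsymbol k\in\Lambda_{\boldsymbol n}\setminus\mathrm{Fix}:\boldsymbol k\prec-\boldsymbol k\}$ (lexicographic order). $P$ is the permutation matrix mapping the canonical basis according to the ordered list: first the elements of $\mathrm{Fix}$ (lexicographically), then the pairs $\boldsymbol k_1,-\boldsymbol k_1,\boldsymbol k_2,-\boldsymbol k_2,\dots$ for $\boldsymbol k_j\in\mathcal K$ in lexicographic order. The second direct sum runs over unordered pairs $\{\boldsymbol k,-\boldsymbol k\}$ with $\boldsymbol k\in\mathcal K$. *)

(* Defs.v *)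
From HB Require Import structures.
From mathcomp Require Import all_boot all_order all_algebra.
From mathcomp Require Import mxtens.
From mathcomp Require Import ring.
From mathcomp Require Import reals trigo.

Set Implicit Arguments.
Unset Strict Implicit.
Unset Printing Implicit Defensive.

Import Order.TTheory GRing.Theory Num.Theory.
Local Open Scope ring_scope.

(* Real quaternions H over a real field R: x = x0 + x1 i + x2 j + x3 (ij),  *)
(* with i^2 = j^2 = -1 and k := ij (Hamilton's convention).                 *)

Section Quaternions.
Variable R : realType.

Record quat := Quat { q0 : R; q1 : R; q2 : R; q3 : R }.

Definition quat2tup (x : quat) := (q0 x, q1 x, q2 x, q3 x).
Definition tup2quat (x : R * R * R * R) :=
  let: (a, b, c, e) := x in Quat a b c e.
Lemma quat2tupK : cancel quat2tup tup2quat. Proof. by case. Qed.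

HB.instance Definition _ := Equality.copy quat (can_type quat2tupK).
HB.instance Definition _ := Choice.copy quat (can_type quat2tupK).

Definition qzero := Quat 0 0 0 0.
Definition qadd x y := Quat (q0 x + q0 y) (q1 x + q1 y) (q2 x + q2 y) (q3 x + q3 y).
Definition qopp x := Quat (- q0 x) (- q1 x) (- q2 x) (- q3 x).

Lemma qaddA : associative qadd.
Proof. by move=> [? ? ? ?] [? ? ? ?] [? ? ? ?]; rewrite /qadd /=; congr Quat; ring. Qed.
Lemma qaddC : commutative qadd.
Proof. by move=> [? ? ? ?] [? ? ? ?]; rewrite /qadd /=; congr Quat; ring. Qed.
Lemma qadd0 : left_id qzero qadd.
Proof. by move=> [? ? ? ?]; rewrite /qadd /=; congr Quat; ring. Qed.
Lemma qaddN : left_inverse qzero qopp qadd.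
Proof. by move=> [? ? ? ?]; rewrite /qadd /=; congr Quat; ring. Qed.

HB.instance Definition _ := GRing.isZmodule.Build quat qaddA qaddC qadd0 qaddN.

Definition qone := Quat 1 0 0 0.
Definition qmul x y :=
  Quat (q0 x * q0 y - q1 x * q1 y - q2 x * q2 y - q3 x * q3 y)
       (q0 x * q1 y + q1 x * q0 y + q2 x * q3 y - q3 x * q2 y)
       (q0 x * q2 y - q1 x * q3 y + q2 x * q0 y + q3 x * q1 y)
       (q0 x * q3 y + q1 x * q2 y - q2 x * q1 y + q3 x * q0 y).

Lemma qmulA : associative qmul.
Proof. by move=> [? ? ? ?] [? ? ? ?] [? ? ? ?]; rewrite /qmul /qadd /=; congr Quat; ring. Qed.
Lemma qmul1 : left_id qone qmul.
Proof. by move=> [? ? ? ?]; rewrite /qmul /qadd /=; congr Quat; ring. Qed.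
Lemma qmulr1 : right_id qone qmul.
Proof. by move=> [? ? ? ?]; rewrite /qmul /qadd /=; congr Quat; ring. Qed.
Lemma qmulDl : left_distributive qmul qadd.
Proof. by move=> [? ? ? ?] [? ? ? ?] [? ? ? ?]; rewrite /qmul /qadd /=; congr Quat; ring. Qed.
Lemma qmulDr : right_distributive qmul qadd.
Proof. by move=> [? ? ? ?] [? ? ? ?] [? ? ? ?]; rewrite /qmul /qadd /=; congr Quat; ring. Qed.
Lemma qone_neq0 : qone != 0.
Proof. by apply/eqP => -[] /eqP; rewrite oner_eq0. Qed.

HB.instance Definition _ :=
  GRing.Zmodule_isNzRing.Build quat qmulA qmul1 qmulr1 qmulDl qmulDr qone_neq0.

Definition qi : quat := Quat 0 1 0 0.
Definition qj : quat := Quat 0 0 1 0.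
Definition qk : quat := Quat 0 0 0 1.
Definition qreal (r : R) : quat := Quat r 0 0 0.
Definition qconj (x : quat) : quat := Quat (q0 x) (- q1 x) (- q2 x) (- q3 x).
Definition qcomp (l : nat) (x : quat) : R :=
  match l with 0 => q0 x | 1 => q1 x | 2 => q2 x | _ => q3 x end.
Definition qexpi (theta : R) : quat := Quat (cos theta) (sin theta) 0 0.

End Quaternions.

Arguments qi {R}. Arguments qj {R}. Arguments qk {R}.

Definition qadj (R : realType) m n (A : 'M[quat R]_(m, n)) : 'M[quat R]_(n, m) :=
  map_mx (@qconj R) A^T.

(* Multi-indices.  Lambda_n = prod_l {0..n_l - 1} (l = 0..d-1) is encoded    *)
(* by the mixed-radix (first coordinate most significant) linear index       *)
(*   k = sum_l k_l * prod_{l' > l} n_l'   in {0, .., N_n - 1},               *)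
(* which is exactly the ordering of Kronecker products, and for which the    *)
(* natural order on linear indices is the lexicographic order on Lambda_n.   *)

Section MultiIndex.
Variables (d : nat) (n : 'I_d -> nat).
Local Open Scope nat_scope.

Definition Nn : nat := \prod_(l < d) n l.
Definition stride (l : 'I_d) : nat := \prod_(l' < d | (l < l')%N) n l'.
Definition mdig (k : nat) (l : 'I_d) : nat := (k %/ stride l) %% n l.
Definition menc (c : 'I_d -> nat) : nat := \sum_(l < d) c l * stride l.
Definition mneg (k : nat) : nat := menc (fun l => (n l - mdig k l) %% n l).
Definition isFix (k : nat) : bool := [forall l : 'I_d, (2 * mdig k l) %% n l == 0%N].
Definition lexlt (k k' : nat) : bool :=
  [exists l : 'I_d, [forall l' : 'I_d, (l' < l)%N ==> (mdig k l' == mdig k' l')]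
                    && (mdig k l < mdig k' l)%N].
Definition Fixl : seq nat := [seq k <- iota 0 Nn | isFix k].
Definition Kl : seq nat := [seq k <- iota 0 Nn | ~~ isFix k && lexlt k (mneg k)].
Definition Pord : seq nat := Fixl ++ flatten [seq [:: k; mneg k] | k <- Kl].
End MultiIndex.

Section Matrices.
Variables (R : realType) (d : nat) (n : 'I_d -> nat).
Local Notation H := (quat R).
Local Notation N := (Nn n).

Definition Pshift (rho : {ffun 'I_d -> int}) : 'M[H]_N :=
  \matrix_(i, j) ([forall l : 'I_d,
      ((mdig n i l)%:Z - (mdig n j l)%:Z - rho l == 0 %[mod (n l)%:Z])%Z])%:R.

Definition Cn s t (F : seq {ffun 'I_d -> int}) (p : {ffun 'I_d -> int} -> 'M[H]_(s, t))
  : 'M[H]_(N * s, N * t) :=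
  \sum_(rho <- F) (Pshift rho *t p rho).

Definition qdft (m u v : nat) : H :=
  qreal (Num.sqrt (m%:R : R))^-1 * qexpi (- (2 * pi * (u * v)%:R / m%:R)).
Definition Fn : 'M[H]_N :=
  \matrix_(i, j) \prod_(l < d) qdft (n l) (mdig n i l) (mdig n j l).

Definition An : 'M[H]_N :=
  \matrix_(i, j) ([forall l : 'I_d, ((mdig n i l + mdig n j l) %% n l)%N == 0%N])%:R.

Definition Shat s t (F : seq {ffun 'I_d -> int}) (p : {ffun 'I_d -> int} -> 'M[H]_(s, t))
  (l : nat) (k : nat) : 'M[H]_(s, t) :=
  \matrix_(a, b) \sum_(rho <- F)
     qreal (qcomp l (p rho a b)) *
     qexpi (- (2 * pi * \sum_(l' < d) ((mdig n k l')%:Z * rho l')%:~R / (n l')%:R)).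

Definition blockdiag s t (B : nat -> 'M[H]_(s, t)) : 'M[H]_(N * s, N * t) :=
  \sum_(k < N) (delta_mx k k *t B k).

Definition Pperm : 'M[H]_N := \matrix_(i, j) (j == nth 0%N (Pord n) i :> nat)%:R.

(* Block direct sum of a list of blocks: each block is given by its number c *)
(* of block-rows (= block-columns) and its s x t sub-blocks B e e' (e, e' < c). *)
Fixpoint bdsum_entry s t (gs : seq (nat * (nat -> nat -> 'M[H]_(s, t))))
   (m : nat) (a : 'I_s) (m' : nat) (b : 'I_t) : H :=
  match gs with
  | [::] => 0
  | (c, B) :: gs' =>
      if (m < c)%N then (if (m' < c)%N then B m m' a b else 0)
      else if (m' < c)%N then 0 else bdsum_entry gs' (m - c) a (m' - c) b
  end.
Definition bdsum s t (gs : seq (nat * (nat -> nat -> 'M[H]_(s, t)))) M M'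
  : 'M[H]_(M * s, M' * t) :=
  \matrix_(i, j) bdsum_entry gs (mxtens_unindex i).1 (mxtens_unindex i).2
                                (mxtens_unindex j).1 (mxtens_unindex j).2.

End Matrices.

(* Main.v *)
Require Import Defs.
From HB Require Import structures.
From mathcomp Require Import all_boot all_order all_algebra.
From mathcomp Require Import mxtens.
From mathcomp Require Import reals trigo.
From mathcomp Require Import complex.
From mathcomp Require Import ring lra zify.
Import Order.TTheory GRing.Theory Num.Theory.
Local Open Scope ring_scope.
Set Implicit Arguments.
Unset Strict Implicit.
Unset Printing Implicit Defensive.

Section Digits.
Local Open Scope nat_scope.

Lemma Nn_rec d (n : 'I_d.+1 -> nat) :
  Nn n = n ord0 * Nn (fun l => n (lift ord0 l)).
Proof. by rewrite /Nn big_ord_recl. Qed.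

Lemma stride0 d (n : 'I_d.+1 -> nat) :
  stride n ord0 = Nn (fun l => n (lift ord0 l)).
Proof. by rewrite /stride big_mkcond big_ord_recl /= /Nn mul1n. Qed.

Lemma strideS d (n : 'I_d.+1 -> nat) l :
  stride n (lift ord0 l) = stride (fun l => n (lift ord0 l)) l.
Proof.
rewrite /stride big_mkcond big_ord_recl /= [in RHS]big_mkcond.
by rewrite mul1n; apply: eq_bigr => i _; rewrite /bump /= !add1n ltnS.
Qed.

Lemma mdigS d (n : 'I_d.+1 -> nat) k l :
  mdig n k (lift ord0 l) = mdig (fun l => n (lift ord0 l)) k l.
Proof. by rewrite /mdig strideS. Qed.

Lemma mdig0 d (n : 'I_d.+1 -> nat) k :
  mdig n k ord0 = (k %/ Nn (fun l => n (lift ord0 l))) %% n ord0.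
Proof. by rewrite /mdig stride0. Qed.

Lemma menc_rec d (n : 'I_d.+1 -> nat) c :
  menc n c = c ord0 * Nn (fun l => n (lift ord0 l)) +
     menc (fun l => n (lift ord0 l)) (fun l => c (lift ord0 l)).
Proof. by rewrite /menc big_ord_recl stride0; congr (_ + _); apply: eq_bigr => i _; rewrite strideS. Qed.

Lemma Nn_gt0 d (n : 'I_d -> nat) : (forall l, 0 < n l) -> 0 < Nn n.
Proof. by move=> h; rewrite /Nn prodn_gt0. Qed.

Lemma menc_lt d (n : 'I_d -> nat) c : (forall l, c l < n l) -> menc n c < Nn n.
Proof.
elim: d n c => [|d IH] n c hc; first by rewrite /menc /Nn !big_ord0.
rewrite menc_rec Nn_rec.
have := IH _ (fun l => c (lift ord0 l)) (fun l => hc _).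
set N' := Nn _; set e := menc _ _ => he.
have h0 := hc ord0.
apply: (@leq_trans (c ord0 * N' + N')); first by rewrite ltn_add2l.
by rewrite -mulSnr leq_mul2r h0 orbT.
Qed.

Lemma mdig_modN d (n : 'I_d -> nat) k q l : mdig n (k + q * Nn n) l = mdig n k l.
Proof.
elim: d n k q l => [|d IH] n k q l; first by case: l.
case: (unliftP ord0 l) => [l'|] ->.
  by rewrite !mdigS Nn_rec mulnA IH.
rewrite !mdig0 Nn_rec mulnA.
case: (posnP (Nn (fun l => n (lift ord0 l)))) => [->|hN].
  by rewrite !divn0.
by rewrite divnDr ?dvdn_mull // mulnK // addnC modnMDl.
Qed.

Lemma mdig_menc d (n : 'I_d -> nat) c : (forall l, c l < n l) ->
  forall l, mdig n (menc n c) l = c l.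
Proof.
elim: d n c => [|d IH] n c hc l; first by case: l.
rewrite menc_rec.
have hlt := menc_lt (fun l => hc (lift ord0 l)).
set N' := Nn _ in hlt *; set e := menc _ _ in hlt *.
case: (unliftP ord0 l) => [l'|] ->.
  by rewrite mdigS addnC mdig_modN IH.
rewrite mdig0 -/N' divnMDl; last by case: N' hlt => //.
by rewrite divn_small // addn0 modn_small.
Qed.

Lemma menc_mdig d (n : 'I_d -> nat) k : k < Nn n -> menc n (mdig n k) = k.
Proof.
elim: d n k => [|d IH] n k hk.
  by move: hk; rewrite /Nn /menc !big_ord0; case: k.
rewrite menc_rec mdig0.
set N' := Nn _.
have hN : 0 < N' by move: hk; rewrite Nn_rec -/N'; case: N' => //; rewrite muln0.
have e1 : menc (fun l => n (lift ord0 l)) (fun l => mdig n k (lift ord0 l))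
          = k %% N'.
  rewrite -[in RHS](IH (fun l => n (lift ord0 l)) (k %% N')) ?ltn_pmod //.
  apply: eq_bigr => i _; rewrite mdigS.
  by rewrite {1}(divn_eq k N') addnC mdig_modN.
rewrite e1 modn_small; first by rewrite -divn_eq.
by rewrite ltn_divLR //; move: hk; rewrite Nn_rec.
Qed.

Lemma mdig_lt d (n : 'I_d -> nat) k l : 0 < n l -> mdig n k l < n l.
Proof. by move=> h; rewrite /mdig ltn_pmod. Qed.

Lemma mdig_inj d (n : 'I_d -> nat) k k' : k < Nn n -> k' < Nn n ->
  (forall l, mdig n k l = mdig n k' l) -> k = k'.
Proof.
move=> hk hk' h; rewrite -(menc_mdig hk) -(menc_mdig hk').
by apply: eq_bigr => i _; rewrite h.
Qed.

End Digits.

Lemma sum_split_mul (R : nmodType) m k (g : nat -> R) :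
  \sum_(v < m * k) g v = \sum_(x < m) \sum_(y < k) g (x * k + y)%N.
Proof.
rewrite pair_big /=.
rewrite (reindex (@mxtens_unindex m k)) /=; last first.
  by exists (@mxtens_index m k) => i _; rewrite (mxtens_indexK, mxtens_unindexK).
by apply: eq_bigr => i _ /=; rewrite -divn_eq.
Qed.

Lemma sum_mdig_prod (R : comPzSemiRingType) d (n : 'I_d -> nat) (f : 'I_d -> nat -> R) :
  \sum_(v < Nn n) \prod_(l < d) f l (mdig n v l) =
  \prod_(l < d) \sum_(w < n l) f l w.
Proof.
elim: d n f => [|d IH] n f.
  by rewrite /Nn !big_ord0 big_ord1 big_ord0.
rewrite Nn_rec (sum_split_mul _ _ (fun v => \prod_(l < d.+1) f l (mdig n v l))) big_ord_recl.
set N' := Nn _.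
rewrite big_distrl /=; apply: eq_bigr => x _.
case: (posnP N') => hN.
  (* N' = 0 : then some n l = 0 *)
  rewrite -/N' hN big_ord0.
  move: (IH (fun l => n (lift ord0 l)) (fun l => f (lift ord0 l))).
  rewrite -/N' hN big_ord0 => <-; by rewrite mulr0.
rewrite -(IH (fun l => n (lift ord0 l)) (fun l => f (lift ord0 l))) big_distrr /=.
apply: eq_bigr => y _.
rewrite big_ord_recl mdig0 -/N' divnMDl // divn_small // addn0 modn_small //.
congr (_ * _); apply: eq_bigr => i _.
by rewrite mdigS addnC mdig_modN.
Qed.

Local Open Scope nat_scope.
Lemma negmodE n x : 0 < n -> x < n -> (n - x) %% n = if x == 0 then 0 else n - x.
Proof.
move=> h1 h2; case: eqP => [->|hx]; first by rewrite subn0 modnn.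
rewrite modn_small //; lia.
Qed.
Lemma mod2E n y : y < 2 * n -> y %% n = if y < n then y else y - n.
Proof.
move=> h; case: ltnP => hy; first by rewrite modn_small.
rewrite -{1}(subnK hy) modnDr modn_small //; lia.
Qed.
Lemma negmodK n x : 0 < n -> x < n -> (n - (n - x) %% n) %% n = x.
Proof.
move=> h1 h2; rewrite (negmodE h1 h2); case: eqP => [->|hx]; first by rewrite subn0 modnn.
rewrite modn_small; lia.
Qed.
Lemma negmod_fix n x : 0 < n -> x < n -> ((2 * ((n - x) %% n)) %% n == 0) = ((2 * x) %% n == 0).
Proof.
move=> h1 h2; rewrite (negmodE h1 h2); have [->|hx] := eqVneq x 0; first by [].
rewrite !mod2E; try lia. case: ifP; case: ifP; move=> *; apply/eqP/eqP; lia.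
Qed.
Lemma negmod_eq n x : 0 < n -> x < n -> ((n - x) %% n == x) = ((2 * x) %% n == 0).
Proof.
move=> h1 h2; rewrite (negmodE h1 h2); have [->|hx] := eqVneq x 0; first by rewrite mod0n.
rewrite !mod2E; try lia. case: ifP; move=> *; apply/eqP/eqP; lia.
Qed.

Section Neg.
Variables (d : nat) (n : 'I_d -> nat).
Hypothesis hn : forall l, 0 < n l.
Local Notation N := (Nn n).

Lemma negdig_lt k l : (n l - mdig n k l) %% n l < n l.
Proof. by rewrite ltn_pmod. Qed.

Lemma mneg_lt k : mneg n k < N.
Proof. by apply: menc_lt => l; apply: negdig_lt. Qed.

Lemma mdig_mneg k l : mdig n (mneg n k) l = (n l - mdig n k l) %% n l.
Proof. by rewrite /mneg mdig_menc // => l'; apply: negdig_lt. Qed.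

Lemma mnegK k : k < N -> mneg n (mneg n k) = k.
Proof.
move=> hk; apply: (@mdig_inj _ n) => //; first exact: mneg_lt.
by move=> l; rewrite !mdig_mneg negmodK // mdig_lt.
Qed.

Lemma isFix_mneg k : isFix n (mneg n k) = isFix n k.
Proof.
rewrite /isFix; apply: eq_forallb => l.
by rewrite mdig_mneg negmod_fix // mdig_lt.
Qed.

Lemma mneg_fix k : k < N -> (mneg n k == k) = isFix n k.
Proof.
move=> hk; apply/eqP/forallP => [h l|h].
  by rewrite -negmod_eq ?mdig_lt // -mdig_mneg h.
apply: (@mdig_inj _ n) => //; first exact: mneg_lt.
by move=> l; rewrite mdig_mneg; apply/eqP; rewrite negmod_eq ?mdig_lt.
Qed.

Lemma lexlt_asym k k' : lexlt n k k' -> ~~ lexlt n k' k.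
Proof.
move=> /existsP[l1 /andP[/forallP h1 lt1]]; apply/negP => /existsP[l2 /andP[/forallP h2 lt2]].
case: (ltngtP l1 l2) => [h|h|/val_inj e].
- by move: (h2 l1); rewrite h /= => /eqP e; move: lt1; rewrite e ltnn.
- by move: (h1 l2); rewrite h /= => /eqP e; move: lt2; rewrite e ltnn.
- by subst l2; move: (ltn_trans lt1 lt2); rewrite ltnn.
Qed.

Lemma lexlt_total k k' : k < N -> k' < N -> k != k' -> lexlt n k k' || lexlt n k' k.
Proof.
move=> hk hk' hne.
have [l0 hl0] : exists l, mdig n k l != mdig n k' l.
  apply/existsP; apply: contraR hne => /existsPn h; apply/eqP.
  by apply: (@mdig_inj _ n) => // l; apply/eqP; move: (h l); rewrite negbK.
case: (@arg_minnP _ l0 (fun l => mdig n k l != mdig n k' l) (fun l : 'I_d => nat_of_ord l) hl0) => l hl hmin.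
have heq : forall l' : 'I_d, l' < l -> mdig n k l' = mdig n k' l'.
  move=> l' hl'; apply/eqP; apply: contraTT hl' => hne'.
  by rewrite -leqNgt hmin.
case: (ltngtP (mdig n k l) (mdig n k' l)) => [h|h|e]; last by rewrite e eqxx in hl.
- apply/orP; left; apply/existsP; exists l; rewrite h andbT.
  by apply/forallP => l'; apply/implyP => /heq ->.
- apply/orP; right; apply/existsP; exists l; rewrite h andbT.
  by apply/forallP => l'; apply/implyP => /heq ->.
Qed.

Lemma perm_flat (T : eqType) (f : T -> T) (L : seq T) :
  perm_eq (flatten [seq [:: k; f k] | k <- L]) (L ++ map f L).
Proof.
elim: L => [|k L IH] //=.
rewrite perm_cons.
have h := perm_catCA L [:: f k] (map f L).
by rewrite perm_sym h /= perm_cons perm_sym.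
Qed.

Lemma mem_Fixl k : (k \in Fixl n) = (k < N) && isFix n k.
Proof. by rewrite mem_filter mem_iota add0n andbC. Qed.

Lemma mem_Kl k : (k \in Kl n) = [&& k < N, ~~ isFix n k & lexlt n k (mneg n k)].
Proof. by rewrite mem_filter mem_iota add0n andbC /= andbA. Qed.

Lemma Pord_uniq : uniq (Pord n).
Proof.
rewrite /Pord cat_uniq (perm_uniq (perm_flat _ _)).
rewrite filter_uniq ?iota_uniq //=.
rewrite cat_uniq filter_uniq ?iota_uniq //=.
apply/and3P; split.
- apply/hasPn => x; rewrite (perm_mem (perm_flat _ _)) mem_cat => /orP[].
    by rewrite mem_Kl mem_Fixl => /and3P[_ /negbTE -> _]; rewrite andbF.
  by case/mapP => y; rewrite mem_Kl mem_Fixl => /and3P[_ hf _] ->; rewrite isFix_mneg (negbTE hf) andbF.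
- apply/hasPn => x /mapP[y hy ->]; rewrite mem_Kl; apply/negP => /and3P[_ _ h2].
  move: hy; rewrite mem_Kl => /and3P[hy _ h1].
  rewrite mnegK // in h2.
  by move: (lexlt_asym h1); rewrite h2.
- rewrite map_inj_in_uniq ?filter_uniq ?iota_uniq // => x y.
  rewrite !mem_Kl => /andP[hx _] /andP[hy _] e.
  by rewrite -(mnegK hx) e mnegK.
Qed.

Lemma mem_Pord k : (k \in Pord n) = (k < N).
Proof.
rewrite /Pord mem_cat (perm_mem (perm_flat _ _)) mem_cat mem_Fixl mem_Kl.
apply/idP/idP.
  case/orP => [/andP[]//|/orP[/andP[]//|/mapP[y _ ->]]]; exact: mneg_lt.
move=> hk; rewrite hk /=.
case hf: (isFix n k) => //=.
case hl: (lexlt n k (mneg n k)) => //=.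
apply/mapP; exists (mneg n k); last by rewrite mnegK.
rewrite mem_Kl mneg_lt isFix_mneg hf /= mnegK //.
have hne : k != mneg n k by rewrite eq_sym mneg_fix // hf.
by move: (lexlt_total hk (mneg_lt k) hne); rewrite hl.
Qed.

Lemma size_Pord : size (Pord n) = N.
Proof.
have p : perm_eq (Pord n) (iota 0 N).
  apply: uniq_perm; first exact: Pord_uniq; first exact: iota_uniq.
  by move=> x; rewrite mem_Pord mem_iota add0n.
by rewrite (perm_size p) size_iota.
Qed.

End Neg.

Local Open Scope ring_scope.

Definition allT T (P : T -> Prop) (s : seq T) : Prop := foldr (fun x acc => P x /\ acc) True s.
Definition exT T (P : T -> Prop) (s : seq T) : Prop := foldr (fun x acc => P x \/ acc) False s.

Lemma exT_cat T (P : T -> Prop) s1 s2 : exT P (s1 ++ s2) <-> exT P s1 \/ exT P s2.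
Proof. elim: s1 => [|x s IH] /=; [tauto|rewrite IH; tauto]. Qed.
Lemma allT_cat T (P : T -> Prop) s1 s2 : allT P (s1 ++ s2) <-> allT P s1 /\ allT P s2.
Proof. elim: s1 => [|x s IH] /=; [tauto|rewrite IH; tauto]. Qed.
Lemma exT_map T U (f : T -> U) (P : U -> Prop) s : exT P (map f s) <-> exT (fun x => P (f x)) s.
Proof. elim: s => [|x s IH] /=; [tauto|rewrite IH; tauto]. Qed.
Lemma allT_map T U (f : T -> U) (P : U -> Prop) s : allT P (map f s) <-> allT (fun x => P (f x)) s.
Proof. elim: s => [|x s IH] /=; [tauto|rewrite IH; tauto]. Qed.
Lemma allT_mem (T : eqType) (P : T -> Prop) s : (forall x, x \in s -> P x) -> allT P s.
Proof.
elim: s => [|x s IH] //= h; split; first by apply: h; exact: mem_head.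
by apply: IH => y hy; apply: h; rewrite inE hy orbT.
Qed.
Lemma exT_mem (T : eqType) (P : T -> Prop) s x : x \in s -> P x -> exT P s.
Proof. elim: s => [|y s IH] //=; rewrite inE => /orP[/eqP <-|h] hp; [by left|right; exact: IH]. Qed.

Section Block.
Variables (R : realType) (s t : nat).
Local Notation M := 'M[quat R]_(s, t).

Lemma bdsum_entryE (X : nat -> nat -> M)
  (gsL : seq (seq nat * (nat -> nat -> M))) :
  uniq (flatten (map fst gsL)) ->
  allT (fun p => forall e e', (e < size p.1)%N -> (e' < size p.1)%N ->
      p.2 e e' = X (nth 0%N p.1 e) (nth 0%N p.1 e')) gsL ->
  (forall x y, x \in flatten (map fst gsL) -> y \in flatten (map fst gsL) ->
      X x y != 0 -> exT (fun p => (x \in p.1) && (y \in p.1)) gsL) ->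
  forall m m' a b, (m < size (flatten (map fst gsL)))%N ->
     (m' < size (flatten (map fst gsL)))%N ->
  bdsum_entry [seq (size p.1, p.2) | p <- gsL] m a m' b =
  X (nth 0%N (flatten (map fst gsL)) m) (nth 0%N (flatten (map fst gsL)) m') a b.
Proof.
elim: gsL => [|[L B] gs IH] //= hu [hB h1] h2 m m' a b hm hm'.
rewrite /= in hB.
move: hu; rewrite cat_uniq => /and3P[huL hdis hu'].
have exF : forall (P : seq nat * (nat -> nat -> M) -> bool) x,
    exT (fun p => (x \in p.1) && P p) gs -> x \in flatten [seq i.1 | i <- gs].
  move=> P x; elim: (gs) => [|q qs IHq] //= [/andP[hx _]|h].
    by rewrite mem_cat hx.
  by rewrite mem_cat IHq ?orbT.
have cross : forall x y, x \in L -> y \in flatten [seq i.1 | i <- gs] ->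
    X x y = 0 /\ X y x = 0.
  move=> x y hx hy; split; apply/eqP; apply: contraNT (hdis) => hne;
  apply/hasP.
    case: (h2 x y ltac:(by rewrite mem_cat hx) ltac:(by rewrite mem_cat hy orbT) hne) => /=.
      by case/andP => _ hyL; exists y.
    move=> hex; exists x => //; apply: (exF (fun p => y \in p.1)) hex.
  case: (h2 y x ltac:(by rewrite mem_cat hy orbT) ltac:(by rewrite mem_cat hx) hne) => /=.
    by case/andP => hyL _; exists y.
  move=> hex; exists x => //.
  have : exT (fun p => (x \in p.1) && (y \in p.1)) gs.
    by elim: (gs) hex => [|q qs IHq] //= [/andP[-> ->]|h]; [left|right; apply: IHq].
  exact: exF.
rewrite !nth_cat.
case: (ltnP m (size L)) => hmL; case: (ltnP m' (size L)) => hmL' //=.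
- by rewrite hB.
- have hy : (m' - size L < size (flatten [seq i.1 | i <- gs]))%N.
    by rewrite ltn_subLR // -size_cat.
  have [-> _] := cross _ _ (mem_nth 0%N hmL) (mem_nth 0%N hy).
  by rewrite mxE.
- have hy : (m - size L < size (flatten [seq i.1 | i <- gs]))%N.
    by rewrite ltn_subLR // -size_cat.
  have [_ ->] := cross _ _ (mem_nth 0%N hmL') (mem_nth 0%N hy).
  by rewrite mxE.
apply: IH => //.
- move=> x y hx hy hne.
  case: (h2 x y ltac:(by rewrite mem_cat hx orbT) ltac:(by rewrite mem_cat hy orbT) hne) => //= /andP[hxL _].
  by move: hdis => /hasP; case; exists x.
- by rewrite ltn_subLR // -size_cat.
- by rewrite ltn_subLR // -size_cat.
Qed.

End Block.

Section Cx.
Variable R : realType.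
Local Notation C := R[i].
Local Notation H := (quat R).
Local Open Scope complex_scope.

Lemma qmulE (x y : H) : x * y = qmul x y. Proof. by []. Qed.
Lemma qaddE (x y : H) : x + y = qadd x y. Proof. by []. Qed.
Lemma qoppE (x : H) : - x = qopp x. Proof. by []. Qed.
Definition phi (z : C) : H := Quat (complex.Re z) (complex.Im z) 0 0.
Definition cconj (z : C) : C := (complex.Re z) -i* (complex.Im z).
Definition cexpi (th : R) : C := (cos th) +i* (sin th).
Definition ee (q : R) : C := cexpi (2 * pi * q).

Lemma phiD x y : phi (x + y) = phi x + phi y.
Proof. by case: x => a b; case: y => c e; rewrite /phi /= qaddE /qadd /= addr0. Qed.
Lemma phi0 : phi 0 = 0. Proof. by []. Qed.
Lemma phiN x : phi (- x) = - phi x.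
Proof. by case: x => a b; rewrite /phi /= qoppE /qopp /= oppr0. Qed.
Lemma phiM x y : phi (x * y) = phi x * phi y.
Proof.
case: x => a b; case: y => c e.
have -> : (a +i* b) * (c +i* e) = (a*c - b*e) +i* (a*e + b*c) by [].
rewrite /phi /= !qmulE /qmul /=; congr Quat; ring.
Qed.
Lemma phi1 : phi 1 = 1. Proof. by []. Qed.
Lemma phi_sum I r (P : pred I) (F : I -> C) :
  phi (\sum_(i <- r | P i) F i) = \sum_(i <- r | P i) phi (F i).
Proof. exact: (big_morph phi phiD phi0). Qed.
Lemma phi_prod I r (P : pred I) (F : I -> C) :
  phi (\prod_(i <- r | P i) F i) = \prod_(i <- r | P i) phi (F i).
Proof. exact: (big_morph phi phiM phi1). Qed.
Lemma phi_nat (b : nat) : phi b%:R = b%:R.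
Proof. by elim: b => // b IH; rewrite -addn1 !natrD phiD IH. Qed.

Lemma cconjD x y : cconj (x + y) = cconj x + cconj y.
Proof. by case: x => a b; case: y => c e; rewrite /cconj /=; congr Complex; rewrite opprD. Qed.
Lemma cconj0 : cconj 0 = 0. Proof. by rewrite /cconj /= oppr0. Qed.
Lemma cconjM x y : cconj (x * y) = cconj x * cconj y.
Proof.
case: x => a b; case: y => c e.
have -> : (a +i* b) * (c +i* e) = (a*c - b*e) +i* (a*e + b*c) by [].
have -> : (a -i* b) * (c -i* e) = (a*c - b*e) -i* (a*e + b*c).
  by apply/eqP; rewrite eq_complex /=; apply/andP; split; apply/eqP; ring.
by [].
Qed.
Lemma cconj1 : cconj 1 = 1. Proof. by rewrite /cconj /= oppr0. Qed.
Lemma cconj_prod I r (P : pred I) (F : I -> C) :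
  cconj (\prod_(i <- r | P i) F i) = \prod_(i <- r | P i) cconj (F i).
Proof. exact: (big_morph cconj cconjM cconj1). Qed.
Lemma cconj_nat (b : nat) : cconj b%:R = b%:R.
Proof. by elim: b => [|b IH]; rewrite ?cconj0 // -addn1 !natrD cconjD IH cconj1. Qed.
Lemma cconj_real (r : R) : cconj (r%:C) = r%:C.
Proof. by rewrite /cconj /= oppr0. Qed.

Lemma qconj_phi z : qconj (phi z) = phi (cconj z).
Proof. by case: z => a b; rewrite /qconj /phi /cconj /= oppr0. Qed.
Lemma qj_phi z : qj * phi z = phi (cconj z) * qj.
Proof. by case: z => a b; rewrite /phi /cconj /= !qmulE /qmul /=; congr Quat; ring. Qed.
Lemma phi_i : phi 'i = qi. Proof. by []. Qed.
Lemma qreal_phi r : qreal r = phi (r%:C). Proof. by []. Qed.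
Lemma qexpi_phi th : qexpi th = phi (cexpi th). Proof. by []. Qed.
Lemma quat_decomp (x : H) :
  x = phi ((q0 x) +i* (q1 x)) + phi ((q2 x) +i* (q3 x)) * qj.
Proof.
case: x => a b c e; rewrite /phi /= !qmulE !qaddE /qmul /qadd /=.
congr Quat; ring.
Qed.
Lemma qk_ij : qk = qi * qj :> H.
Proof. by rewrite !qmulE /qmul /=; congr Quat; ring. Qed.
Lemma phi_comm x y : phi x * phi y = phi y * phi x.
Proof. by rewrite -!phiM mulrC. Qed.

Lemma cexpiD a b : cexpi (a + b) = cexpi a * cexpi b.
Proof.
rewrite /cexpi cosD sinD.
by apply/eqP; rewrite eq_complex /=; apply/andP; split; apply/eqP; ring.
Qed.
Lemma cexpi0 : cexpi 0 = 1.
Proof. by rewrite /cexpi cos0 sin0. Qed.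
Lemma cconj_cexpi th : cconj (cexpi th) = cexpi (- th).
Proof. by rewrite /cconj /cexpi cosN sinN. Qed.
Lemma cexpiN th : cexpi (- th) * cexpi th = 1.
Proof. by rewrite -cexpiD addNr cexpi0. Qed.

Lemma eeD a b : ee (a + b) = ee a * ee b.
Proof. by rewrite /ee mulrDr cexpiD. Qed.
Lemma ee0 : ee 0 = 1. Proof. by rewrite /ee mulr0 cexpi0. Qed.
Lemma ee1 : ee 1 = 1.
Proof. by rewrite /ee mulr1 /cexpi mulr_natl cos2pi sin2pi. Qed.
Lemma ee_nat (m : nat) : ee m%:R = 1.
Proof. by elim: m => [|m IH]; rewrite ?ee0 // -addn1 natrD eeD IH ee1 mulr1. Qed.
Lemma eeN a : ee (- a) * ee a = 1.
Proof. by rewrite -eeD addNr ee0. Qed.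
Lemma ee_int (m : int) : ee m%:~R = 1.
Proof.
case: m => m; first exact: ee_nat.
rewrite NegzE intrN.
by have := eeN ((m.+1)%:R : R); rewrite ee_nat mulr1.
Qed.
Lemma ee_add_int a (m : int) : ee (a + m%:~R) = ee a.
Proof. by rewrite eeD ee_int mulr1. Qed.

End Cx.

Section Geo.
Variable R : realType.
Local Notation C := R[i].
Local Open Scope complex_scope.

Lemma ee_pow (q : R) m : ee q ^+ m = ee (q * m%:R).
Proof.
elim: m => [|m IH]; first by rewrite expr0 mulr0 ee0.
by rewrite exprS IH -eeD; congr ee; rewrite -addn1 natrD; ring.
Qed.

Lemma ee_neq1 (r n : nat) : (0 < r)%N -> (r < n)%N -> ee (r%:R / n%:R : R) != 1.
Proof.
move=> hr hrn; apply/negP => /eqP h.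
have hc : cos (2 * pi * (r%:R / n%:R)) = 1 :> R by move: h; rewrite /ee /cexpi => -[].
set y := pi * (r%:R / n%:R) : R.
have hn : (0 < n%:R :> R) by rewrite ltr0n; apply: leq_trans hrn.
have hy0 : 0 < y by rewrite /y mulr_gt0 ?pi_gt0 // divr_gt0 // ltr0n.
have hy1 : y < pi.
  rewrite /y -[X in _ < X]mulr1 ltr_pM2l ?pi_gt0 // ltr_pdivrMr // mul1r ltr_nat //.
have hs := sin_gt0_pi (ltac:(by rewrite hy0 hy1) : 0 < y < pi).
have : cos (y *+ 2) = 1 by rewrite -hc /y mulr2n; congr cos; ring.
rewrite cos_mulr2n cos2sin2 => e.
have : sin y ^+ 2 = 0 by move: e; lra.
by move/eqP; rewrite expf_eq0 /= (gt_eqF hs).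
Qed.

Lemma geo (a : int) (n : nat) : (0 < n)%N ->
  \sum_(y < n) ee ((a * y%:Z)%:~R / n%:R : R) = if (n%:Z %| a)%Z then n%:R else 0.
Proof.
move=> hn.
have hnR : (n%:R : R) != 0 by rewrite pnatr_eq0 -lt0n.
case: ifP => hdvd.
  have [q ->] := dvdzP hdvd.
  rewrite (eq_bigr (fun=> 1)); first by rewrite sumr_const card_ord.
  move=> y _; rewrite -[X in ee X](_ : (q * y%:Z)%:~R = _); first exact: ee_int.
  by field.
set z := ee (a%:~R / n%:R : R).
have hz : forall y : 'I_n, ee ((a * y%:Z)%:~R / n%:R : R) = z ^+ y.
  by move=> y; rewrite /z ee_pow; congr ee; field.
rewrite (eq_bigr _ (fun y _ => hz y)).
have zn : z ^+ n = 1.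
  by rewrite /z ee_pow -[X in ee X](_ : a%:~R = _) ?ee_int //; field.
have z1 : z - 1 != 0.
  rewrite subr_eq0 /z.
  have hn0 : n%:Z != 0 by rewrite eqz_nat -lt0n.
  rewrite {1}(divz_eq a n%:Z).
  have hr0 : (0 <= (a %% n%:Z)%Z) by rewrite modz_ge0.
  have hrn : ((a %% n%:Z)%Z < n%:Z) by rewrite ltz_pmod // ltz_nat.
  rewrite -[X in ee X](_ : ((absz (a %% n%:Z)%Z)%:R / n%:R) + ((a %/ n%:Z)%Z)%:~R = _); last first.
    rewrite -[(absz _)%:R]/((Posz (absz _))%:~R) gez0_abs //.
    by field.
  rewrite ee_add_int; apply: ee_neq1; last first.
    by rewrite -ltz_nat gez0_abs.
  rewrite lt0n absz_eq0; apply: contraFN hdvd => /eqP h.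
  exact/dvdz_mod0P.
apply/eqP; move: zn => /eqP; rewrite -subr_eq0 subrX1 mulf_eq0 (negbTE z1) /=.
by move/eqP ->.
Qed.

End Geo.

Section OneD.
Variable R : realType.
Local Notation C := R[i].
Local Open Scope complex_scope.

Definition dftC (n u v : nat) : C :=
  ((Num.sqrt (n%:R : R))^-1)%:C * cexpi (- (2 * pi * (u * v)%:R / n%:R)).
Definition indz (n x y : nat) (rho : int) : bool :=
  ((x%:Z - y%:Z - rho == 0 %[mod n%:Z])%Z).

Lemma qdft_phi n u v : qdft R n u v = phi (dftC n u v).
Proof. by rewrite /qdft qreal_phi qexpi_phi -phiM. Qed.

Lemma realcM (a b : R) : a%:C * b%:C = (a * b)%:C.
Proof. by apply/eqP; rewrite eq_complex /=; apply/andP; split; apply/eqP; ring. Qed.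

Lemma cexpi_ee (th : R) : cexpi th = ee (th / (2 * pi)).
Proof.
rewrite /ee; congr cexpi.
have hp : (2 * pi : R) != 0 by rewrite mulf_neq0 ?pnatr_eq0 // gt_eqF ?pi_gt0.
by rewrite mulrC divfK.
Qed.

Lemma ind_eq n x y rho : (0 < n)%N -> (x < n)%N ->
  indz n x y rho = (x == absz ((y%:Z + rho) %% n%:Z)%Z).
Proof.
move=> hn hx.
have hn0 : n%:Z != 0 by rewrite eqz_nat -lt0n.
rewrite /indz eqz_mod_dvd subr0.
rewrite -eqz_nat gez0_abs ?modz_ge0 //.
rewrite -[in RHS](@modz_small x%:Z n%:Z); last by rewrite ltz_nat hx.
by rewrite eqz_mod_dvd opprD addrA.
Qed.

Definition cst (n : nat) : C := ((Num.sqrt (n%:R : R))^-1)%:C.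

Lemma dftC_ee n u v : (0 < n)%N -> dftC n u v = cst n * ee (- ((u * v)%:R / n%:R)).
Proof.
move=> hn; rewrite /dftC cexpi_ee; congr (_ * ee _).
have hP : (pi : R) != 0 by rewrite gt_eqF ?pi_gt0.
have hnR : (n%:R : R) != 0 by rewrite pnatr_eq0 -lt0n.
move: hP; generalize (@pi R) => P hP.
by field; rewrite ?hnR ?hP.
Qed.

Lemma collapse n k y rho (W : C) : (0 < n)%N ->
  \sum_(x < n) dftC n k x * (indz n x y rho)%:R * W =
  cst n * ee (- ((k%:Z * (y%:Z + rho))%:~R / n%:R)) * W.
Proof.
move=> hn.
have hn0 : n%:Z != 0 by rewrite eqz_nat -lt0n.
set r := ((y%:Z + rho) %% n%:Z)%Z.
have hr0 : 0 <= r by rewrite modz_ge0.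
have hrn : (absz r < n)%N by rewrite -ltz_nat gez0_abs // ltz_pmod // ltz_nat.
rewrite (bigD1 (Ordinal hrn)) //= big1 => [|x hx]; last first.
  rewrite ind_eq //.
  have -> : (nat_of_ord x == absz r) = false.
    by apply: contraNF hx => /eqP h; apply/eqP; apply: val_inj.
  by rewrite mulr0 mul0r.
rewrite ind_eq // eqxx mulr1 addr0 dftC_ee //.
congr (_ * _ * _).
have hnR : (n%:R : R) != 0 by rewrite pnatr_eq0 -lt0n.
have er : ((absz r)%:R : R) = r%:~R by rewrite -[LHS]/((Posz (absz r))%:~R : R) gez0_abs.
rewrite natrM er.
set q := ((y%:Z + rho) %/ n%:Z)%Z.
have e : r = (y%:Z + rho) - q * n%:Z by rewrite /r /q {2}(divz_eq (y%:Z + rho) n%:Z) addrAC subrr add0r.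
rewrite -[RHS](ee_add_int _ (k%:Z * q)).
congr ee; rewrite e; field; exact: hnR.
Qed.

Lemma cconj_ee q : cconj (ee q) = ee (- q) :> C.
Proof. by rewrite /ee cconj_cexpi; congr cexpi; ring. Qed.

Lemma cconj_cst n : cconj (cst n) = cst n.
Proof. exact: cconj_real. Qed.

Lemma cst2 n : (0 < n)%N -> cst n * cst n * n%:R = 1.
Proof.
move=> hn; rewrite /cst realcM -invfM -expr2 sqr_sqrtr ?ler0n //.
rewrite -(rmorph_nat (real_complex R)) realcM mulVf //.
by rewrite pnatr_eq0 -lt0n.
Qed.

Lemma cexpi_ee2 (n : nat) (z : int) : (0 < n)%N ->
  cexpi (- (2 * pi * (z%:~R / n%:R))) = ee (- (z%:~R / n%:R)) :> C.
Proof.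
move=> hn; rewrite cexpi_ee; congr ee.
have hP : (pi : R) != 0 by rewrite gt_eqF ?pi_gt0.
have hnR : (n%:R : R) != 0 by rewrite pnatr_eq0 -lt0n.
move: hP; generalize (@pi R) => P hP.
by field; rewrite ?hnR ?hP.
Qed.

Lemma dvd_diff (n k k' : nat) : (k < n)%N -> (k' < n)%N ->
  (n%:Z %| k'%:Z - k%:Z)%Z = (k == k').
Proof.
move=> hk hk'; rewrite -eqz_mod_dvd !modz_small ?ltz_nat ?hk ?hk' //.
by rewrite eqz_nat eq_sym.
Qed.

Lemma T1_1D (n k k' : nat) (rho : int) : (0 < n)%N -> (k < n)%N -> (k' < n)%N ->
  \sum_(x < n) \sum_(y < n) dftC n k x * (indz n x y rho)%:R * cconj (dftC n k' y)
  = (k == k')%:R * cexpi (- (2 * pi * ((k%:Z * rho)%:~R / n%:R))).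
Proof.
move=> hn hk hk'.
have hnR : (n%:R : R) != 0 by rewrite pnatr_eq0 -lt0n.
rewrite exchange_big /=.
under eq_bigr => y _ do rewrite collapse //.
have term : forall y : 'I_n,
  cst n * ee (- ((k%:Z * (y%:Z + rho))%:~R / n%:R)) * cconj (dftC n k' y) =
  (cst n * cst n * ee (- ((k%:Z * rho)%:~R / n%:R))) *
     ee (((k'%:Z - k%:Z) * y%:Z)%:~R / n%:R).
  move=> y; rewrite dftC_ee // cconjM cconj_cst cconj_ee mulrACA -eeD -[RHS]mulrA -eeD.
  by congr (_ * ee _); field.
rewrite (eq_bigr _ (fun y _ => term y)) -big_distrr /= geo // dvd_diff //.
rewrite cexpi_ee2 //.
case: eqP => _; last by rewrite !mulr0 mul0r.
by rewrite mulrAC cst2 // mul1r.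
Qed.

Lemma T2_1D (n k k' : nat) (rho : int) : (0 < n)%N -> (k < n)%N -> (k' < n)%N ->
  \sum_(x < n) \sum_(y < n) dftC n k x * (indz n x y rho)%:R * dftC n k' y
  = ((n %| k + k')%N)%:R * cexpi (- (2 * pi * ((k%:Z * rho)%:~R / n%:R))).
Proof.
move=> hn hk hk'.
have hnR : (n%:R : R) != 0 by rewrite pnatr_eq0 -lt0n.
rewrite exchange_big /=.
under eq_bigr => y _ do rewrite collapse //.
have term : forall y : 'I_n,
  cst n * ee (- ((k%:Z * (y%:Z + rho))%:~R / n%:R)) * dftC n k' y =
  (cst n * cst n * ee (- ((k%:Z * rho)%:~R / n%:R))) *
     ee (((- (k%:Z + k'%:Z)) * y%:Z)%:~R / n%:R).
  move=> y; rewrite dftC_ee // mulrACA -eeD -[RHS]mulrA -eeD.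
  by congr (_ * ee _); field.
rewrite (eq_bigr _ (fun y _ => term y)) -big_distrr /= geo //.
have -> : (n%:Z %| - (k%:Z + k'%:Z))%Z = (n %| k + k')%N by rewrite dvdzE abszN.
rewrite cexpi_ee2 //.
case: (n %| k + k')%N; last by rewrite !mulr0 mul0r.
by rewrite mulrAC cst2 // mul1r.
Qed.

End OneD.

Lemma sum_tens (T : nmodType) m q (f : 'I_(m * q) -> T) :
  \sum_i f i = \sum_(x < m) \sum_(y < q) f (mxtens_index (x, y)).
Proof.
rewrite pair_big /=.
rewrite (reindex (@mxtens_index m q)) /=; last first.
  by exists (@mxtens_unindex m q) => i _; rewrite (mxtens_indexK, mxtens_unindexK).
by apply: eq_bigr => -[x y].
Qed.

Lemma forall_prodR (T : comPzSemiRingType) (I : finType) (b : I -> bool) :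
  ([forall i, b i])%:R = \prod_i (b i)%:R :> T.
Proof.
case: (boolP [forall i, b i]) => [/forallP h | /forallPn [i hi]].
  by rewrite big1 // => i _; rewrite h.
by rewrite (bigD1 i) //= (negbTE hi) mul0r.
Qed.

Lemma sum_delta_l (T : pzSemiRingType) m (a : 'I_m) (f : 'I_m -> T) :
  \sum_(a' < m) (a == a')%:R * f a' = f a.
Proof.
rewrite (bigD1 a) //= eqxx mul1r big1 ?addr0 // => a' ha'.
by rewrite eq_sym (negbTE ha') mul0r.
Qed.

Lemma sum_delta_r (T : pzSemiRingType) m (a : 'I_m) (f : 'I_m -> T) :
  \sum_(a' < m) f a' * (a' == a)%:R = f a.
Proof.
rewrite (bigD1 a) //= eqxx mulr1 big1 ?addr0 // => a' ha'.
by rewrite (negbTE ha') mulr0.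
Qed.

Lemma mulmx_scalar_r (T : pzRingType) m q (A : 'M[T]_(m, q)) (c : T) i j :
  (A *m c%:M) i j = A i j * c.
Proof.
rewrite mxE (bigD1 j) //= big1 ?addr0 => [|k hk]; first by rewrite mxE eqxx mulr1n.
by rewrite mxE (negbTE hk) mulr0n mulr0.
Qed.

Lemma dvdn_negmod (n x y : nat) : (0 < n)%N -> (x < n)%N -> (y < n)%N ->
  (n %| x + y)%N = (y == (n - x) %% n)%N.
Proof.
move=> hn hx hy; rewrite negmodE //.
have [->|hx0] := eqVneq x 0%N; first by rewrite add0n; apply/idP/eqP => [/dvdn_leq|->] //; lia.
rewrite /dvdn mod2E; last by lia.
case: ifP => h; apply/eqP/eqP; lia.
Qed.

Section Multi.
Variables (R : realType) (d : nat) (n : 'I_d -> nat).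
Hypothesis hn : forall l, (0 < n l)%N.
Local Notation N := (Nn n).
Local Notation C := R[i].
Local Open Scope complex_scope.

Definition FC (k u : nat) : C := \prod_(l < d) dftC R (n l) (mdig n k l) (mdig n u l).

Lemma Fn_phi (k u : 'I_N) : Fn R n k u = phi (FC k u).
Proof. by rewrite mxE phi_prod; apply: eq_bigr => l _; rewrite qdft_phi. Qed.

Definition PC (rho : {ffun 'I_d -> int}) (u v : nat) : C :=
  \prod_(l < d) (indz (n l) (mdig n u l) (mdig n v l) (rho l))%:R.

Lemma Pshift_phi rho (u v : 'I_N) : Pshift R n rho u v = phi (PC rho u v).
Proof. by rewrite mxE -phi_nat forall_prodR. Qed.

Lemma mneg_cond k k' : (k < N)%N -> (k' < N)%N ->
  [forall l, (n l %| mdig n k l + mdig n k' l)%N] = (k' == mneg n k).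
Proof.
move=> hk hk'; apply/idP/eqP => [/forallP h|->].
  apply: (@mdig_inj _ n) => // [|l]; first exact: mneg_lt.
  by rewrite mdig_mneg //; apply/eqP; rewrite -dvdn_negmod ?mdig_lt.
by apply/forallP => l; rewrite mdig_mneg // dvdn_negmod ?mdig_lt ?eqxx // ltn_pmod.
Qed.

Definition Eg (k : nat) (rho : {ffun 'I_d -> int}) : C :=
  cexpi (- (2 * pi * \sum_(l' < d) ((mdig n k l')%:Z * rho l')%:~R / (n l')%:R)).

Lemma cexpi_sumN (I : Type) (r : seq I) (f : I -> R) :
  cexpi (- (2 * pi * \sum_(i <- r) f i)) = \prod_(i <- r) cexpi (- (2 * pi * f i)).
Proof.
elim: r => [|x r IH]; first by rewrite !big_nil mulr0 oppr0 cexpi0.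
by rewrite !big_cons -IH -cexpiD; congr cexpi; ring.
Qed.

Lemma T1_multi (k k' : nat) rho : (k < N)%N -> (k' < N)%N ->
  \sum_(u < N) \sum_(v < N) FC k u * PC rho u v * cconj (FC k' v) =
  (k == k')%:R * Eg k rho.
Proof.
move=> hk hk'.
have e1 : forall u v : 'I_N, FC k u * PC rho u v * cconj (FC k' v) =
   \prod_(l < d) (dftC R (n l) (mdig n k l) (mdig n u l) *
        (indz (n l) (mdig n u l) (mdig n v l) (rho l))%:R *
        cconj (dftC R (n l) (mdig n k' l) (mdig n v l))).
  by move=> u v; rewrite /FC /PC cconj_prod -!big_split.
under eq_bigr => u _ do under eq_bigr => v _ do rewrite e1.
under eq_bigr => u _ do rewrite (sum_mdig_prod n (fun l y => dftC R (n l) (mdig n k l) (mdig n u l) *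
        (indz (n l) (mdig n u l) y (rho l))%:R *
        cconj (dftC R (n l) (mdig n k' l) y))).
rewrite (sum_mdig_prod n (fun l x => \sum_(y < n l) dftC R (n l) (mdig n k l) x *
        (indz (n l) x y (rho l))%:R *
        cconj (dftC R (n l) (mdig n k' l) y))).
under eq_bigr => l _ do rewrite T1_1D ?mdig_lt //.
rewrite big_split /= -forall_prodR /Eg cexpi_sumN.
congr (_%:R * _); congr nat_of_bool.
apply/idP/eqP => [/forallP h|->]; last by apply/forallP.
by apply: (@mdig_inj _ n) => // l; apply/eqP; apply: h.
Qed.

Lemma T2_multi (k k' : nat) rho : (k < N)%N -> (k' < N)%N ->
  \sum_(u < N) \sum_(v < N) FC k u * PC rho u v * FC k' v =
  (k' == mneg n k)%:R * Eg k rho.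
Proof.
move=> hk hk'.
have e1 : forall u v : 'I_N, FC k u * PC rho u v * FC k' v =
   \prod_(l < d) (dftC R (n l) (mdig n k l) (mdig n u l) *
        (indz (n l) (mdig n u l) (mdig n v l) (rho l))%:R *
        dftC R (n l) (mdig n k' l) (mdig n v l)).
  by move=> u v; rewrite /FC /PC -!big_split.
under eq_bigr => u _ do under eq_bigr => v _ do rewrite e1.
under eq_bigr => u _ do rewrite (sum_mdig_prod n (fun l y => dftC R (n l) (mdig n k l) (mdig n u l) *
        (indz (n l) (mdig n u l) y (rho l))%:R *
        dftC R (n l) (mdig n k' l) y)).
rewrite (sum_mdig_prod n (fun l x => \sum_(y < n l) dftC R (n l) (mdig n k l) x *
        (indz (n l) x y (rho l))%:R *
        dftC R (n l) (mdig n k' l) y)).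
under eq_bigr => l _ do rewrite T2_1D ?mdig_lt //.
rewrite big_split /= -forall_prodR /Eg cexpi_sumN.
by rewrite mneg_cond.
Qed.

End Multi.

Section Entries.
Variables (R : realType).
Local Notation H := (quat R).
Local Open Scope complex_scope.

Lemma qconjM (x y : H) : qconj (x * y) = qconj y * qconj x.
Proof. by case: x => a b c e; case: y => a' b' c' e'; rewrite !qmulE /qmul /qconj /=; congr Quat; ring. Qed.
Lemma qconj_nat (m : nat) : qconj (m%:R : H) = m%:R.
Proof. by rewrite -phi_nat qconj_phi cconj_nat. Qed.
Lemma cconjK (z : R[i]) : cconj (cconj z) = z.
Proof. by case: z => a b; rewrite /cconj /= opprK. Qed.
Lemma nat_comm (m : nat) (x : H) : m%:R * x = x * m%:R.
Proof. by rewrite mulr_natl mulr_natr. Qed.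

Lemma L1 N s r (G : 'M[H]_N) (M : 'M[H]_(N * s, r)) k a j :
  ((G *t (1%:M : 'M[H]_s)) *m M) (mxtens_index (k, a)) j =
  \sum_(u < N) G k u * M (mxtens_index (u, a)) j.
Proof.
rewrite mxE sum_tens; apply: eq_bigr => u _.
under eq_bigr => a' _ do rewrite tensmxE mxE -mulrA.
rewrite -big_distrr /=; congr (_ * _).
rewrite (bigD1 a) //= eqxx mul1r big1 ?addr0 // => a' ha'.
by rewrite eq_sym (negbTE ha') mul0r.
Qed.

Lemma L2 N t r (G : 'M[H]_N) (M : 'M[H]_(r, N * t)) i k' b :
  (M *m qadj (G *t (1%:M : 'M[H]_t))) i (mxtens_index (k', b)) =
  \sum_(v < N) M i (mxtens_index (v, b)) * qconj (G k' v).
Proof.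
rewrite mxE sum_tens; apply: eq_bigr => v _.
under eq_bigr => b' _ do rewrite /qadj mxE mxE tensmxE mxE qconjM qconj_nat.
rewrite (bigD1 b) //= eqxx mul1r big1 ?addr0 // => b' hb'.
by rewrite eq_sym (negbTE hb') mul0r mulr0.
Qed.

Lemma term_eq (A B D : R[i]) (x : H) :
  phi A * phi B * x * phi (cconj D) =
  phi ((q0 x +i* q1 x) * (A * B * cconj D)) + phi ((q2 x +i* q3 x) * (A * B * D)) * qj.
Proof.
rewrite {1}(quat_decomp x) mulrDr mulrDl -!mulrA qj_phi cconjK !mulrA -!phiM.
by congr (phi _ + phi _ * _); ring.
Qed.

Lemma cplx_decomp (c0 c1 : R) (E : R[i]) :
  phi (c0%:C * E) + phi (c1%:C * E) * qi = phi ((c0 +i* c1) * E).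
Proof.
rewrite -phi_i -phiM -phiD; congr phi.
have -> : (c0 +i* c1) = c0%:C + c1%:C * 'i.
  by apply/eqP; rewrite eq_complex /=; apply/andP; split; apply/eqP; ring.
by rewrite mulrDl mulrAC.
Qed.

End Entries.

Section Main.
Variables (R : realType) (d : nat) (n : 'I_d -> nat).
Hypothesis hn : forall l, (0 < n l)%N.
Variables (s t : nat) (F : seq {ffun 'I_d -> int}) (p : {ffun 'I_d -> int} -> 'M[quat R]_(s, t)).
Local Notation N := (Nn n).
Local Notation H := (quat R).
Local Open Scope complex_scope.

Definition z1 (x : H) : R[i] := q0 x +i* q1 x.
Definition z2 (x : H) : R[i] := q2 x +i* q3 x.

Lemma Xentry (k k' : 'I_N) a b :
  ((Fn R n *t (1%:M : 'M[H]_s)) *m Cn n F p *m qadj (Fn R n *t (1%:M : 'M[H]_t)))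
     (mxtens_index (k, a)) (mxtens_index (k', b)) =
  \sum_(rho <- F) (phi (z1 (p rho a b) * ((k == k' :> nat)%:R * Eg R n k rho)) +
                   phi (z2 (p rho a b) * ((k' == mneg n k :> nat)%:R * Eg R n k rho)) * qj).
Proof.
rewrite L2.
under eq_bigr => v _ do rewrite L1.
transitivity (\sum_(v < N) \sum_(u < N) \sum_(rho <- F)
   (phi (z1 (p rho a b) * (FC R n k u * PC R n rho u v * cconj (FC R n k' v))) +
    phi (z2 (p rho a b) * (FC R n k u * PC R n rho u v * FC R n k' v)) * qj)).
  apply: eq_bigr => v _; rewrite big_distrl /=; apply: eq_bigr => u _.
  rewrite /Cn summxE big_distrr big_distrl /=; apply: eq_bigr => rho _.
  by rewrite tensmxE Fn_phi Pshift_phi Fn_phi qconj_phi [X in X * _ = _]mulrA term_eq.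
rewrite exchange_big /=; under eq_bigr => u _ do rewrite exchange_big /=.
rewrite exchange_big /=; apply: eq_bigr => rho _.
rewrite -(T1_multi R hn) // -(T2_multi R hn) //.
rewrite !big_distrr !phi_sum big_distrl -big_split /=; apply: eq_bigr => u _.
by rewrite !big_distrr !phi_sum big_distrl -big_split.
Qed.


Lemma addmxE' m q (A B : 'M[H]_(m, q)) i j : (A + B) i j = A i j + B i j.
Proof. by rewrite mxE. Qed.

Lemma Shat_entry l k a b :
  (Shat n F p l k) a b = \sum_(rho <- F) phi ((qcomp l (p rho a b))%:C * Eg R n k rho).
Proof. by rewrite mxE; apply: eq_bigr => rho _; rewrite qreal_phi qexpi_phi -phiM. Qed.

Definition Sx l k a b := (Shat n F p l k) a b.

Lemma Xentry_NF (k k' : 'I_N) a b :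
  ((Fn R n *t (1%:M : 'M[H]_s)) *m Cn n F p *m qadj (Fn R n *t (1%:M : 'M[H]_t)))
     (mxtens_index (k, a)) (mxtens_index (k', b)) =
  (k == k' :> nat)%:R * (Sx 0 k a b + Sx 1 k a b * qi) +
  (k' == mneg n k :> nat)%:R * ((Sx 2 k a b + Sx 3 k a b * qi) * qj).
Proof.
rewrite Xentry big_split /= /Sx !Shat_entry; congr (_ + _).
  rewrite big_distrl -big_split big_distrr /=; apply: eq_bigr => rho _.
  rewrite cplx_decomp -phi_nat -phiM; congr phi; rewrite /z1 /=; ring.
rewrite big_distrl -big_split big_distrl big_distrr /=; apply: eq_bigr => rho _.
rewrite cplx_decomp -phi_nat [RHS]mulrA -phiM; congr (phi _ * _); rewrite /z2 /=; ring.
Qed.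


Lemma Lam_entry (B : nat -> 'M[H]_(s, t)) (k k' : 'I_N) a b :
  (blockdiag n B) (mxtens_index (k, a)) (mxtens_index (k', b)) = (k == k')%:R * B k a b.
Proof.
rewrite /blockdiag summxE.
under eq_bigr => k'' _ do rewrite tensmxE mxE.
rewrite (bigD1 k) //= eqxx /= big1 ?addr0 => [|k'' hk].
  by rewrite eq_sym.
by rewrite eq_sym (negbTE hk) mul0r.
Qed.

Lemma AI_entry (w k' : 'I_N) (b' b : 'I_t) :
  (An R n *t (1%:M : 'M[H]_t)) (mxtens_index (w, b')) (mxtens_index (k', b)) =
  (k' == mneg n w :> nat)%:R * (b' == b)%:R.
Proof.
rewrite tensmxE !mxE; congr (_%:R * _); congr nat_of_bool.
by rewrite -(mneg_cond hn) //.
Qed.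

Lemma LamAI_entry (B : nat -> 'M[H]_(s, t)) (k k' : 'I_N) a b :
  (blockdiag n B *m (An R n *t (1%:M : 'M[H]_t))) (mxtens_index (k, a)) (mxtens_index (k', b))
  = B k a b * (k' == mneg n k :> nat)%:R.
Proof.
rewrite mxE sum_tens.
under eq_bigr => w _ do under eq_bigr => b' _ do rewrite Lam_entry AI_entry mulrA.
under eq_bigr => w _ do rewrite (sum_delta_r b (fun b' => (k == w)%:R * B k a b' * (k' == mneg n w :> nat)%:R)).
under eq_bigr => w _ do rewrite -!mulrA.
by rewrite sum_delta_l.
Qed.

Lemma part1 (k k' : 'I_N) a b :
  (blockdiag n (Shat n F p 0) + blockdiag n (Shat n F p 1) *m qi%:M +
   blockdiag n (Shat n F p 2) *m (An R n *t (1%:M : 'M[H]_t)) *m qj%:M +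
   blockdiag n (Shat n F p 3) *m (An R n *t (1%:M : 'M[H]_t)) *m qk%:M)
   (mxtens_index (k, a)) (mxtens_index (k', b)) =
  (k == k' :> nat)%:R * (Sx 0 k a b + Sx 1 k a b * qi) +
  (k' == mneg n k :> nat)%:R * ((Sx 2 k a b + Sx 3 k a b * qi) * qj).
Proof.
rewrite !addmxE' !mulmx_scalar_r !LamAI_entry !Lam_entry /Sx.
have e : (val k == val k') = (k == k') by [].
rewrite e.
case: (k == k'); case: (val k' == mneg n k);
  by rewrite ?mul1r ?mul0r ?mulr1 ?mulr0 ?add0r ?addr0 ?mulrDl ?qk_ij ?mulrA ?mul0r ?addr0 ?addrA.
Qed.
End Main.

Lemma sum_pick (T : pzSemiRingType) N (w : nat) (hw : (w < N)%N) (f : 'I_N -> T) :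
  \sum_(u < N) ((u == w :> nat))%:R * f u = f (Ordinal hw).
Proof.
rewrite (bigD1 (Ordinal hw)) //= eqxx mul1r big1 ?addr0 // => u hu.
have -> : (val u == w) = false by apply: contraNF hu => /eqP h; apply/eqP/val_inj.
by rewrite mul0r.
Qed.

Lemma sum_pick_r (T : pzSemiRingType) N (w : nat) (hw : (w < N)%N) (f : 'I_N -> T) :
  \sum_(u < N) f u * ((u == w :> nat))%:R = f (Ordinal hw).
Proof.
rewrite (bigD1 (Ordinal hw)) //= eqxx mulr1 big1 ?addr0 // => u hu.
have -> : (val u == w) = false by apply: contraNF hu => /eqP h; apply/eqP/val_inj.
by rewrite mulr0.
Qed.

Section Part2.
Variables (R : realType) (d : nat) (n : 'I_d -> nat).
Hypothesis hn : forall l, (0 < n l)%N.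
Variables (s t : nat) (F : seq {ffun 'I_d -> int}) (p : {ffun 'I_d -> int} -> 'M[quat R]_(s, t)).
Local Notation N := (Nn n).
Local Notation H := (quat R).

Definition NFn (x y : nat) a b : H :=
  (x == y)%:R * (Sx n F p 0 x a b + Sx n F p 1 x a b * qi) +
  (y == mneg n x)%:R * ((Sx n F p 2 x a b + Sx n F p 3 x a b * qi) * qj).

Lemma nth_Pord_lt (m : 'I_N) : (nth 0%N (Pord n) m < N)%N.
Proof. by rewrite -(mem_Pord hn) mem_nth // size_Pord. Qed.

Lemma part2_lhs (m m' : 'I_N) a b :
  ((Pperm R n *t (1%:M : 'M[H]_s)) *m (Fn R n *t (1%:M : 'M[H]_s)) *m Cn n F p
     *m qadj (Fn R n *t (1%:M : 'M[H]_t)) *m qadj (Pperm R n *t (1%:M : 'M[H]_t)))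
     (mxtens_index (m, a)) (mxtens_index (m', b)) =
  NFn (nth 0%N (Pord n) m) (nth 0%N (Pord n) m') a b.
Proof.
rewrite -[_ *m _ *m Cn n F p]mulmxA -[_ *m (_ *m Cn n F p) *m _]mulmxA.
rewrite L2.
under eq_bigr => v _ do rewrite L1.
under eq_bigr => v _ do under eq_bigr => u _ do rewrite mxE.
under eq_bigr => v _ do rewrite (sum_pick (nth_Pord_lt m)).
under eq_bigr => v _ do rewrite [Pperm R n m' v]mxE qconj_nat.
rewrite (sum_pick_r (nth_Pord_lt m')).
by rewrite Xentry_NF.
Qed.


Definition D1m (k : nat) : 'M[H]_(s, t) := Shat n F p 0 k + Shat n F p 1 k *m (qi%:M : 'M_t).
Definition D2m (k : nat) : 'M[H]_(s, t) :=
  (Shat n F p 2 k + Shat n F p 3 k *m (qi%:M : 'M_t)) *m (qj%:M : 'M_t).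
Definition Xm (x y : nat) : 'M[H]_(s, t) := \matrix_(a, b) NFn x y a b.

Lemma Xm_D1D2 x y : Xm x y = (if x == y then D1m x else 0) + (if y == mneg n x then D2m x else 0).
Proof.
apply/matrixP => a b; rewrite [LHS]mxE /NFn /D1m /D2m.
have z0 : (0 : 'M[H]_(s, t)) a b = 0 by rewrite mxE.
by case: (x == y); case: (y == mneg n x);
  rewrite ?addmxE' ?mulmx_scalar_r ?addmxE' ?mulmx_scalar_r ?z0 /Sx ?mul1r ?mul0r ?add0r ?addr0.
Qed.

Lemma flatten_seq1 (T : Type) (r : seq T) : flatten [seq [:: x] | x <- r] = r.
Proof. by elim: r => //= x r ->. Qed.

Lemma part2_rhs (m m' : 'I_N) a b :
  bdsum_entry
    ([seq (1%N, fun _ _ : nat => D1m k + D2m k) | k <- Fixl n] ++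
     [seq (2%N, fun e e' : nat =>
            if e == 0%N then (if e' == 0%N then D1m k else D2m k)
            else (if e' == 0%N then D2m (mneg n k) else D1m (mneg n k))) | k <- Kl n])
    m a m' b = NFn (nth 0%N (Pord n) m) (nth 0%N (Pord n) m') a b.
Proof.
set gsL := [seq ([:: k], fun _ _ : nat => D1m k + D2m k) | k <- Fixl n] ++
     [seq ([:: k; mneg n k], fun e e' : nat =>
            if e == 0%N then (if e' == 0%N then D1m k else D2m k)
            else (if e' == 0%N then D2m (mneg n k) else D1m (mneg n k))) | k <- Kl n].
have eb : [seq (1%N, fun _ _ : nat => D1m k + D2m k) | k <- Fixl n] ++
     [seq (2%N, fun e e' : nat =>
            if e == 0%N then (if e' == 0%N then D1m k else D2m k)
            else (if e' == 0%N then D2m (mneg n k) else D1m (mneg n k))) | k <- Kl n]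
     = [seq (size q.1, q.2) | q <- gsL] by rewrite map_cat -!map_comp.
have ef : flatten (map fst gsL) = Pord n.
  by rewrite map_cat -!map_comp flatten_cat /Pord flatten_seq1.
rewrite eb.
have -> : NFn (nth 0%N (Pord n) m) (nth 0%N (Pord n) m') a b =
   Xm (nth 0%N (flatten (map fst gsL)) m) (nth 0%N (flatten (map fst gsL)) m') a b.
  by rewrite ef mxE.
have hsz : size (flatten (map fst gsL)) = N by rewrite ef size_Pord.
apply: bdsum_entryE; rewrite ?hsz //.
- by rewrite ef; apply: Pord_uniq.
- apply/allT_cat; split; apply/allT_map; apply: allT_mem => k hk /=.
    move: hk; rewrite mem_Fixl => /andP[hkN hfix].
    have ek : mneg n k = k by apply/eqP; rewrite mneg_fix.
    move=> [|e] [|e'] //= _ _.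
    by rewrite Xm_D1D2 eqxx ek eqxx.
  move: hk; rewrite mem_Kl => /and3P[hkN hfix _].
  have ne : (k == mneg n k) = false by rewrite eq_sym mneg_fix // (negbTE hfix).
  have ne' : (mneg n k == k) = false by rewrite mneg_fix // (negbTE hfix).
  have kk : mneg n (mneg n k) = k by rewrite mnegK.
  move=> [|[|e]] [|[|e']] //= _ _;
    by rewrite Xm_D1D2 ?eqxx ?ne ?ne' ?kk ?ne' ?eqxx ?addr0 ?add0r.
- move=> x y; rewrite ef => hx hy hne.
  have hxy : (x == y) || (y == mneg n x).
    apply: contraR hne; rewrite negb_or => /andP[/negbTE h1 /negbTE h2].
    by rewrite Xm_D1D2 h1 h2 addr0.
  have hxN : (x < N)%N by rewrite -(mem_Pord hn).
  move: hx; rewrite /Pord mem_cat (perm_mem (perm_flat _ _)) mem_cat.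
  case/or3P => [hxF|hxK|/mapP[k hk ex]]; last subst x.
  + apply/exT_cat; left; apply/exT_map; apply: (exT_mem hxF) => /=.
    move: hxF; rewrite mem_Fixl => /andP[_ hf].
    have ek : mneg n x = x by apply/eqP; rewrite mneg_fix.
    by rewrite !inE eqxx /=; case/orP: hxy => /eqP ->; rewrite ?ek ?eqxx.
  + apply/exT_cat; right; apply/exT_map; apply: (exT_mem hxK) => /=.
    by rewrite !inE eqxx /=; case/orP: hxy => /eqP <-; rewrite eqxx ?orbT.
  + apply/exT_cat; right; apply/exT_map; apply: (exT_mem hk) => /=.
    have kN : (k < N)%N by move: hk; rewrite mem_Kl => /andP[].
    rewrite !inE eqxx orbT /=.
    by case/orP: hxy => [/eqP <-|/eqP ->]; rewrite ?mnegK ?eqxx ?orbT.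
Qed.

End Part2.

Theorem mainTheorem16 (R : realType) (d : nat) (n : 'I_d -> nat)
  (n_gt0 : forall l, (0 < n l)%N) (s t : nat)
  (F : seq {ffun 'I_d -> int}) (F_uniq : uniq F)
  (p : {ffun 'I_d -> int} -> 'M[quat R]_(s, t)) :
  let N := Nn n in
  let UL : 'M[quat R]_(N * s) := Fn R n *t (1%:M : 'M[quat R]_s) in
  let UR : 'M[quat R]_(N * t) := Fn R n *t (1%:M : 'M[quat R]_t) in
  let C := Cn n F p in
  let Lam l := blockdiag n (Shat n F p l) in
  let AI : 'M[quat R]_(N * t) := An R n *t (1%:M : 'M[quat R]_t) in
  let D1 k := Shat n F p 0 k + Shat n F p 1 k *m (qi%:M : 'M_t) in
  let D2 k := (Shat n F p 2 k + Shat n F p 3 k *m (qi%:M : 'M_t)) *m (qj%:M : 'M_t) in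
  let PiL : 'M[quat R]_(N * s) := Pperm R n *t (1%:M : 'M[quat R]_s) in
  let PiR : 'M[quat R]_(N * t) := Pperm R n *t (1%:M : 'M[quat R]_t) in
  let blocks :=
    [seq (1%N, fun _ _ : nat => D1 k + D2 k) | k <- Fixl n] ++
    [seq (2%N, fun e e' : nat =>
            if e == 0%N then (if e' == 0%N then D1 k else D2 k)
            else (if e' == 0%N then D2 (mneg n k) else D1 (mneg n k))) | k <- Kl n] in
  UL *m C *m qadj UR =
    Lam 0%N + Lam 1%N *m qi%:M + Lam 2%N *m AI *m qj%:M + Lam 3%N *m AI *m qk%:M
  /\
  PiL *m UL *m C *m qadj UR *m qadj PiR = bdsum blocks N N.
Proof.
cbv beta zeta.
split.
- apply/matrixP => ii jj.
  rewrite -[ii]mxtens_unindexK -[jj]mxtens_unindexK.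
  case: (mxtens_unindex ii) => k a; case: (mxtens_unindex jj) => k' b.
  by rewrite (Xentry_NF n_gt0) (part1 n_gt0).
- apply/matrixP => ii jj.
  rewrite -[ii]mxtens_unindexK -[jj]mxtens_unindexK.
  case: (mxtens_unindex ii) => m a; case: (mxtens_unindex jj) => m' b.
  rewrite (part2_lhs n_gt0) /bdsum mxE !mxtens_indexK /=.
  by rewrite (part2_rhs n_gt0).
Qed.
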